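(* Let $d\ge2$, $\lambda\ge1$, let $B$ be a magnetic field with bounded derivatives of all orders and $A$ its transversal gauge potential. Then for all $y,x,\xi\in\mathbb{R}^d$ and $1\le j\le d$, $$-i\partial_{y_j}g^{A,\lambda}_{x,\xi}(y)=i\partial_{x_j}g^{A,\lambda}_{x,\xi}(y)-\sum_{k=1}^dB_{jk}(x)\,i\partial_{\xi_k}g^{A,\lambda}_{x,\xi}(y)+\Big[A_j(y)-A_j(x)-r^{(1)}_x\big(A_j(\cdot,x)\big)(y)+r^{(1)}_x\big(A_j(x,\cdot)\big)(y)\Big]g^{A,\lambda}_{x,\xi}(y).$$
   Context: $B=(B_{jk})$, $B_{jk}\in C^\infty(\mathbb{R}^d,\mathbb{R})$, $B_{jk}=-B_{kj}$, $B$ closed, $\sup|\partial^\alpha B_{jk}|\le C_\alpha$. For $x\in\mathbb{R}^d$, $A_j(y,x):=-\sum_{k=1}^d\int_0^1s(y_k-x_k)B_{jk}(x+s(y-x))\,ds$, and $A_j(y):=A_j(y,0)$. $\varphi^A(y,x):=(y-x)\cdot\int_0^1A((1-s)x+sy)\,ds$. $g(y)=(2\pi)^{-d/2}\pi^{-d/4}e^{-|y|^2/2}$, $g^{A,\lambda}_{x,\xi}(y)=\lambda^{d/2}e^{i\xi\cdot(y-x)}g(\lambda(y-x))e^{i\varphi^A(y,x)}$. For a smooth function $f$ of $y$, $r^{(1)}_x(f)(y):=f(y)-f(x)-\nabla f(x)\cdot(y-x)$ is the remainder of the first-order Taylor expansion at $x$; here it is applied to $y\mapsto A_j(y,x)$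 and $y\mapsto A_j(x,y)$. *)

(* Defs.v *)
From Stdlib Require Import Reals List.
From Coquelicot Require Import Coquelicot.
From mathcomp Require Import ssreflect ssrbool eqtype ssrnat seq fintype.
Set Implicit Arguments.
Unset Strict Implicit.
Local Open Scope R_scope.

Definition vec (d : nat) := 'I_d -> R.

Definition sumI {d : nat} (f : 'I_d -> R) : R :=
  fold_right Rplus 0 (map f (enum 'I_d)).

Definition upd {d : nat} (x : vec d) (j : 'I_d) (t : R) : vec d :=
  fun i => if i == j then x i + t else x i.

Definition partial {d : nat} (f : vec d -> R) (j : 'I_d) (x : vec d) : R :=
  Derive (fun t => f (upd x j t)) 0.

Definition has_partial {d : nat} (f : vec d -> R) (j : 'I_d) (x : vec d) : Prop :=
  ex_derive (fun t => f (upd x j t)) 0.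

Fixpoint iter_partial {d : nat} (l : list 'I_d) (f : vec d -> R) : vec d -> R :=
  match l with
  | nil => f
  | j :: l' => partial (iter_partial l' f) j
  end.

(* C^infinity with all derivatives bounded: every iterated partial derivative
   exists everywhere and is bounded (bounded partials of order k+1 make the
   order-k partials Lipschitz, hence continuous, so this is exactly
   "smooth with sup |d^alpha f| <= C_alpha"). *)
Definition smooth_bdd {d : nat} (f : vec d -> R) : Prop :=
  forall l : list 'I_d,
    (forall (j : 'I_d) (x : vec d), has_partial (iter_partial l f) j x) /\
    (exists C : R, forall x : vec d, Rabs (iter_partial l f x) <= C).

Definition magnetic_field {d : nat} (B : 'I_d -> 'I_d -> vec d -> R) : Prop :=
  (forall j k, smooth_bdd (B j k)) /\
  (forall j k x, B j k x = - B k j x) /\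
  (forall i j k x, partial (B j k) i x + partial (B k i) j x + partial (B i j) k x = 0).

Definition Agauge {d : nat} (B : 'I_d -> 'I_d -> vec d -> R) (j : 'I_d)
  (y x : vec d) : R :=
  - sumI (fun k => RInt (fun s => s * (y k - x k) * B j k (fun i => x i + s * (y i - x i))) 0 1).

Definition zerov {d : nat} : vec d := fun _ => 0.

Definition A0 {d : nat} (B : 'I_d -> 'I_d -> vec d -> R) (j : 'I_d) (y : vec d) : R :=
  Agauge B j y zerov.

Definition phiA {d : nat} (B : 'I_d -> 'I_d -> vec d -> R) (y x : vec d) : R :=
  sumI (fun j => (y j - x j) * RInt (fun s => A0 B j (fun i => (1 - s) * x i + s * y i)) 0 1).

Definition dotv {d : nat} (u v : vec d) : R := sumI (fun i => u i * v i).

Definition gauss (d : nat) (y : vec d) : R :=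
  Rpower (2 * PI) (- (INR d / 2)) * Rpower PI (- (INR d / 4)) * exp (- dotv y y / 2).

Definition cexpi (th : R) : C := (cos th, sin th).

Definition gA {d : nat} (B : 'I_d -> 'I_d -> vec d -> R) (lam : R) (x xi y : vec d) : C :=
  Cmult (RtoC (Rpower lam (INR d / 2) * gauss (fun i => lam * (y i - x i))))
        (Cmult (cexpi (dotv xi (fun i => y i - x i))) (cexpi (phiA B y x))).

Definition Cpartial {d : nat} (F : vec d -> C) (j : 'I_d) (x : vec d) : C :=
  (partial (fun z => Re (F z)) j x, partial (fun z => Im (F z)) j x).

Definition has_Cpartial {d : nat} (F : vec d -> C) (j : 'I_d) (x : vec d) : Prop :=
  has_partial (fun z => Re (F z)) j x /\ has_partial (fun z => Im (F z)) j x.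

Definition Csum {d : nat} (f : 'I_d -> C) : C :=
  fold_right Cplus (RtoC 0) (map f (enum 'I_d)).


Definition taylor_rem1 {d : nat} (f : vec d -> R) (x y : vec d) : R :=
  f y - f x - sumI (fun i => partial f i x * (y i - x i)).

(* Main.v *)
Require Import Defs.
From Stdlib Require Import Reals List Lra FunctionalExtensionality.
From Coquelicot Require Import Coquelicot.
From mathcomp Require Import ssreflect ssrbool eqtype ssrnat seq fintype.
From Stdlib Require Import Lra FunctionalExtensionality.

Section Main.
Local Open Scope R_scope.
Context {d : nat}.
Implicit Types (f g : 'I_d -> R).

Definition sumL (l : seq 'I_d) (f : 'I_d -> R) := fold_right Rplus 0 (map f l).

Lemma sumL_ext l f g : (forall i, f i = g i) -> sumL l f = sumL l g.
Proof. move=> H; elim: l => [|a l IH] //=; by rewrite /sumL /= H -/(sumL l f) IH. Qed.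

Lemma sumL_plus l f g : sumL l (fun i => f i + g i) = sumL l f + sumL l g.
Proof. elim: l => [|a l IH] /=; rewrite /sumL /=; [ring|]. rewrite -!/(sumL _ _) IH; ring. Qed.

Lemma sumL_scal l c f : sumL l (fun i => c * f i) = c * sumL l f.
Proof. elim: l => [|a l IH] /=; rewrite /sumL /=; [ring|]. rewrite -!/(sumL _ _) IH; ring. Qed.

Lemma sumL_zero l : sumL l (fun _ => 0) = 0.
Proof. elim: l => [|a l IH] /=; rewrite /sumL /=; [ring|]. rewrite -!/(sumL _ _) IH; ring. Qed.

Lemma sumL_le l f g : (forall i, f i <= g i) -> sumL l f <= sumL l g.
Proof. move=> H; elim: l => [|a l IH] /=; rewrite /sumL /=; [lra|]. rewrite -!/(sumL _ _). move: (H a); lra. Qed.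

Lemma sumL_abs l f : Rabs (sumL l f) <= sumL l (fun i => Rabs (f i)).
Proof. elim: l => [|a l IH] /=; rewrite /sumL /=. rewrite Rabs_R0; lra.
rewrite -!/(sumL _ _). eapply Rle_trans; [apply Rabs_triang|]. lra. Qed.

Lemma sumL_term l f k : (forall i, 0 <= f i) -> k \in l -> f k <= sumL l f.
Proof. move=> H; elim: l => [|a l IH] //=. rewrite in_cons /sumL /= -/(sumL _ _).
have Hs : 0 <= sumL l f by (apply: Rle_trans (sumL_le l (fun _ => 0) f H); rewrite sumL_zero; lra).
case/orP => [/eqP ->|Hk]. move: (H a); lra. move: (IH Hk) (H a); lra. Qed.

Lemma sumL_swap l1 l2 (f : 'I_d -> 'I_d -> R) :
  sumL l1 (fun i => sumL l2 (fun k => f i k)) = sumL l2 (fun k => sumL l1 (fun i => f i k)).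
Proof. elim: l1 => [|a l IH] /=. rewrite /sumL /= -/(sumL _ _) sumL_zero //.
rewrite /sumL /= -!/(sumL _ _) IH -sumL_plus //. Qed.

Lemma sumL_delta l f j : uniq l ->
  sumL l (fun i => f i * (if i == j then 1 else 0)) = if j \in l then f j else 0.
Proof. elim: l => [|a l IH] //=. rewrite /sumL /= -/(sumL _ _) in_cons.
case/andP => Ha Hu. rewrite IH //. case: (eqVneq a j) => [Haj|Haj].
- subst a. rewrite (negbTE Ha) /=. ring.
- rewrite /=. ring. Qed.

Lemma sumIL (f : 'I_d -> R) : sumI f = sumL (enum 'I_d) f.
Proof. by []. Qed.

Lemma sumI_ext f g : (forall i, f i = g i) -> sumI f = sumI g.
Proof. rewrite !sumIL; apply sumL_ext. Qed.
Lemma sumI_plus f g : sumI (fun i => f i + g i) = sumI f + sumI g.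
Proof. rewrite !sumIL; apply sumL_plus. Qed.
Lemma sumI_scal c f : sumI (fun i => c * f i) = c * sumI f.
Proof. rewrite !sumIL; apply sumL_scal. Qed.
Lemma sumI_zero : sumI (fun _ : 'I_d => 0) = 0.
Proof. rewrite !sumIL; apply sumL_zero. Qed.
Lemma sumI_opp f : sumI (fun i => - f i) = - sumI f.
Proof. rewrite -(sumI_ext (fun i => -1 * f i)) ?sumI_scal; intros; ring. Qed.
Lemma sumI_minus f g : sumI (fun i => f i - g i) = sumI f - sumI g.
Proof. rewrite /Rminus -sumI_opp -sumI_plus //. Qed.
Lemma sumI_le f g : (forall i, f i <= g i) -> sumI f <= sumI g.
Proof. rewrite !sumIL; apply sumL_le. Qed.
Lemma sumI_abs f : Rabs (sumI f) <= sumI (fun i => Rabs (f i)).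
Proof. rewrite !sumIL; apply sumL_abs. Qed.
Lemma sumI_term f k : (forall i, 0 <= f i) -> f k <= sumI f.
Proof. move=> H; rewrite !sumIL; apply sumL_term => //. by rewrite mem_enum. Qed.
Lemma sumI_nonneg f : (forall i, 0 <= f i) -> 0 <= sumI f.
Proof. move=> H; rewrite -sumI_zero; by apply sumI_le. Qed.
Lemma sumI_swap (f : 'I_d -> 'I_d -> R) :
  sumI (fun i => sumI (fun k => f i k)) = sumI (fun k => sumI (fun i => f i k)).
Proof. rewrite !sumIL; apply sumL_swap. Qed.
Lemma sumI_delta f j : sumI (fun i => f i * (if i == j then 1 else 0)) = f j.
Proof. rewrite sumIL sumL_delta ?enum_uniq // mem_enum //. Qed.

Lemma is_derive_sumI (f : 'I_d -> R -> R) f' t :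
  (forall i, is_derive (f i) t (f' i)) ->
  is_derive (fun t => sumI (fun i => f i t)) t (sumI f').
Proof. move=> H; rewrite /sumI. elim: (enum 'I_d) => [|a l IH] /=.
 apply: is_derive_const. by apply: (is_derive_plus (f a) _ t). Qed.

Lemma RInt_sumI (f : 'I_d -> R -> R) a b :
  (forall i, ex_RInt (f i) a b) ->
  ex_RInt (fun s => sumI (fun i => f i s)) a b /\
  RInt (fun s => sumI (fun i => f i s)) a b = sumI (fun i => RInt (f i) a b).
Proof. move=> H; rewrite /sumI. elim: (enum 'I_d) => [|c l [IH1 IH2]] /=.
 split. apply: ex_RInt_const. rewrite RInt_const /scal /= /mult /=; ring.
 split. by apply: (ex_RInt_plus (f c)).
 rewrite (RInt_plus (f c)) // IH2 //. Qed.

Lemma c2_sumI (f : 'I_d -> R -> R -> R) u v :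
  (forall i, continuity_2d_pt (f i) u v) ->
  continuity_2d_pt (fun a b => sumI (fun i => f i a b)) u v.
Proof. move=> H; rewrite /sumI. elim: (enum 'I_d) => [|c l IH] /=.
 apply: continuity_2d_pt_const. by apply: continuity_2d_pt_plus. Qed.

End Main.

Section Anal.
Local Open Scope R_scope.
Context {d : nat}.
Implicit Types (f : vec d -> R).

Definition ev (j : 'I_d) : vec d := fun i => if i == j then 1 else 0.
Definition norm1 (a b : vec d) := sumI (fun k => Rabs (a k - b k)).

Lemma upd_lin (x : vec d) j t i : upd x j t i = x i + t * ev j i.
Proof. rewrite /upd /ev; case: (i == j); ring. Qed.

Lemma upd0 (x : vec d) j : upd x j 0 = x.
Proof. apply functional_extensionality => i; rewrite upd_lin; ring. Qed.

Lemma norm1_ge0 a b : 0 <= norm1 a b.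
Proof. apply sumI_nonneg => i; apply Rabs_pos. Qed.

Lemma norm1_term a b k : Rabs (a k - b k) <= norm1 a b.
Proof. apply (sumI_term (fun k => Rabs (a k - b k))) => i; apply Rabs_pos. Qed.

Lemma norm1_upd (z : vec d) i s : norm1 (upd z i s) z = Rabs s.
Proof. rewrite /norm1 -(sumI_delta (fun _ => Rabs s) i).
apply sumI_ext => k; rewrite upd_lin /ev; case: (k == i).
 by replace (z k + s * 1 - z k) with s by ring; ring. by replace (z k + s * 0 - z k) with 0 by ring; rewrite Rabs_R0; ring. Qed.

Lemma deriv_shift (F : R -> R) t0 l : is_derive (fun h => F (t0 + h)) 0 l -> is_derive F t0 l.
Proof. move=> H.
have H2 : is_derive (fun t => t - t0) t0 1 by auto_derive; auto; ring.
have H1 : is_derive (fun h => F (t0 + h)) (t0 - t0) l by replace (t0 - t0) with 0 by ring.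
have := is_derive_comp (fun h => F (t0 + h)) (fun t => t - t0) t0 l 1 H1 H2. rewrite /scal /= /mult /= Rmult_1_l.
apply: is_derive_ext => t /=. f_equal; ring. Qed.

Lemma mvt_bound (F F' : R -> R) a b M :
  (forall t, is_derive F t (F' t)) ->
  (forall t, Rmin a b <= t <= Rmax a b -> Rabs (F' t) <= M) ->
  Rabs (F b - F a) <= M * Rabs (b - a).
Proof. move=> HD HB.
have [c [Hc ->]] := MVT_gen F a b F' (fun x _ => HD x)
  (fun x _ => proj2 (continuity_pt_filterlim _ _) (ex_derive_continuous F x (ex_intro _ _ (HD x)))).
rewrite Rabs_mult; apply Rmult_le_compat_r; [apply Rabs_pos| by apply HB]. Qed.

Lemma partial_at f i (x : vec d) t0 : has_partial f i (upd x i t0) ->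
  is_derive (fun t => f (upd x i t)) t0 (partial f i (upd x i t0)).
Proof. move=> H. apply deriv_shift.
have E : forall h, upd (upd x i t0) i h = upd x i (t0 + h).
  move=> h; apply functional_extensionality => k; rewrite !upd_lin; ring.
have := Derive_correct _ _ H. rewrite /partial. apply: is_derive_ext => h. by rewrite E. Qed.

Definition mix (l : seq 'I_d) (a b : vec d) : vec d := fun k => if k \in l then a k else b k.

Lemma mix_nil a b : mix [::] a b = b.
Proof. by apply functional_extensionality => k; rewrite /mix in_nil. Qed.
Lemma mix_enum a b : mix (enum 'I_d) a b = a.
Proof. by apply functional_extensionality => k; rewrite /mix mem_enum. Qed.
Lemma mix_in i l a b : i \in l -> mix (i :: l) a b = mix l a b.
Proof. move=> H; apply functional_extensionality => k; rewrite /mix in_cons.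
case: (eqVneq k i) => [->|] //=. by rewrite H. Qed.
Lemma mix_notin i l a b : i \notin l -> mix (i :: l) a b = upd (mix l a b) i (a i - b i).
Proof. move=> H; apply functional_extensionality => k; rewrite /mix /upd in_cons.
case: (eqVneq k i) => [->|] //=. rewrite (negbTE H); ring. Qed.

Lemma lip_first f C : (forall i z, has_partial f i z) ->
  (forall i z, Rabs (partial f i z) <= C) ->
  forall a b, Rabs (f a - f b) <= C * norm1 a b.
Proof. move=> Hp Hb a b.
have step : forall z i t, Rabs (f (upd z i t) - f z) <= C * Rabs t.
{ move=> z i t. have := mvt_bound (fun s => f (upd z i s)) (fun s => partial f i (upd z i s)) 0 t C.
  rewrite upd0 Rminus_0_r. apply. move=> s; apply partial_at, Hp. move=> s _; apply Hb. }
have : forall l, Rabs (f (mix l a b) - f b) <= C * sumL l (fun k => Rabs (a k - b k)).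
{ elim => [|i l IH]. rewrite mix_nil /sumL /=. rewrite Rminus_diag Rabs_R0; lra.
  have HC : 0 <= C by apply: Rle_trans (Hb i b); apply Rabs_pos.
  rewrite /sumL /= -/(sumL _ _).
  have Hai := Rabs_pos (a i - b i).
  case: (boolP (i \in l)) => Hi.
  - rewrite mix_in //. rewrite Rmult_plus_distr_l. have := Rmult_le_pos _ _ HC Hai. lra.
  - rewrite mix_notin //. 
    replace (f (upd (mix l a b) i (a i - b i)) - f b) with
      ((f (upd (mix l a b) i (a i - b i)) - f (mix l a b)) + (f (mix l a b) - f b)) by ring.
    eapply Rle_trans; [apply Rabs_triang|]. rewrite Rmult_plus_distr_l.
    apply Rplus_le_compat; [apply step|apply IH]. }
move=> /(_ (enum 'I_d)). by rewrite mix_enum. Qed.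

Lemma fin_bound (P : 'I_d -> R -> Prop) :
  (forall i C C', P i C -> C <= C' -> P i C') -> (forall i, exists C, P i C) ->
  exists C, 0 <= C /\ forall i, P i C.
Proof. move=> Hm Hex.
suff : forall l : seq 'I_d, exists C, 0 <= C /\ forall i, i \in l -> P i C.
{ move=> /(_ (enum 'I_d)) [C [HC H]]. exists C; split => // i. apply H; by rewrite mem_enum. }
elim => [|a l [C [HC IH]]]. exists 0; split => //; lra.
have [Ca Ha] := Hex a. exists (Rmax C Ca); split. apply: Rle_trans HC (Rmax_l _ _).
move=> i; rewrite in_cons; case/orP => [/eqP ->|Hi].
 apply: Hm Ha (Rmax_r _ _). apply: Hm (IH _ Hi) (Rmax_l _ _). Qed.

Lemma iter_partial_app f i (l : list 'I_d) :
  iter_partial l (partial f i) = iter_partial (l ++ [:: i]) f.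
Proof. elim: l => [|j l IH] //=. by rewrite IH. Qed.

Lemma sb_partial f i : smooth_bdd f -> smooth_bdd (partial f i).
Proof. move=> H l. rewrite iter_partial_app. apply H. Qed.

Lemma sb_has f : smooth_bdd f -> forall i z, has_partial f i z.
Proof. move=> H i z. exact: (proj1 (H nil) i z). Qed.

Lemma sb_bound f : smooth_bdd f -> exists C, 0 <= C /\ forall z, Rabs (f z) <= C.
Proof. move=> H. have [C HC] := proj2 (H nil). exists (Rabs C); split. apply Rabs_pos.
move=> z; apply: Rle_trans (HC z) (Rle_abs _). Qed.

Lemma sb_bound1 f : smooth_bdd f -> exists C, 0 <= C /\ forall i z, Rabs (partial f i z) <= C.
Proof. move=> H. apply fin_bound.
 move=> i C C' H1 H2 z; apply: Rle_trans (H1 z) H2.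
 move=> i. have [C [_ HC]] := sb_bound _ (sb_partial _ i H). by exists C. Qed.

Lemma sb_lip f : smooth_bdd f -> exists C, 0 <= C /\ forall a b, Rabs (f a - f b) <= C * norm1 a b.
Proof. move=> H. have [C [HC0 HC]] := sb_bound1 _ H. exists C; split => //.
 apply lip_first => //. apply sb_has => //. Qed.

Lemma taylor2 f : smooth_bdd f -> exists K, 0 <= K /\ forall a b,
  Rabs (f a - f b - sumI (fun k => partial f k b * (a k - b k))) <= K * (norm1 a b)^2.
Proof. move=> H.
have [C2 [HC2 HB2]] : exists C, 0 <= C /\ forall i m z, Rabs (partial (partial f i) m z) <= C.
{ apply fin_bound. move=> i C C' H1 H2 m z; apply: Rle_trans (H1 m z) H2.
  move=> i. have [C [_ HC]] := sb_bound1 _ (sb_partial _ i H). by exists C. }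
have Lip : forall i a b, Rabs (partial f i a - partial f i b) <= C2 * norm1 a b.
{ move=> i; apply lip_first. apply sb_has, sb_partial, H. apply HB2. }
have step : forall z i t, Rabs (f (upd z i t) - f z - partial f i z * t) <= C2 * t^2.
{ move=> z i t.
  have := mvt_bound (fun s => f (upd z i s) - s * partial f i z)
     (fun s => partial f i (upd z i s) - partial f i z) 0 t (C2 * Rabs t).
  rewrite upd0 Rminus_0_r. replace (f (upd z i t) - t * partial f i z - (f z - 0 * partial f i z))
    with (f (upd z i t) - f z - partial f i z * t) by ring.
  move=> Hm. eapply Rle_trans; [apply Hm|].
  - move=> s. apply: is_derive_minus. apply partial_at, sb_has, H.
    have := is_derive_scal (fun s => s) s (partial f i z) 1 (is_derive_id s).
    rewrite Rmult_1_r. apply: is_derive_ext => u; rewrite /scal /= /mult /=; ring.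
  - move=> s Hs. eapply Rle_trans; [apply Lip|]. rewrite norm1_upd.
    apply Rmult_le_compat_l => //.
    move: Hs; rewrite /Rmin /Rmax; case: Rle_dec => ? ?; split_Rabs; lra.
  - rewrite /= Rmult_1_r Rmult_assoc -Rabs_mult; apply Rmult_le_compat_l => //.
    rewrite Rabs_right; [lra| apply Rle_ge; nra]. }
exists (2 * C2); split; first lra. move=> a b.
set N := norm1 a b. have HN := norm1_ge0 a b.
suff : forall l, uniq l -> Rabs (f (mix l a b) - f b - sumL l (fun k => partial f k b * (a k - b k)))
   <= 2 * C2 * sumL l (fun k => Rabs (a k - b k)) * N.
{ move=> /(_ (enum 'I_d) (enum_uniq _)). rewrite mix_enum -!sumIL. by rewrite /= Rmult_1_r Rmult_assoc. }
elim => [|i l IH] /=. rewrite mix_nil /sumL /=. rewrite Rminus_diag Rminus_0_r Rabs_R0; lra.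
case/andP => Hi Hu. rewrite mix_notin // /sumL /= -!/(sumL _ _).
set z := mix l a b. set t := a i - b i.
have Ht : Rabs t <= N by apply norm1_term.
have Hz : norm1 z b <= N.
{ apply sumI_le => k. rewrite /z /mix. case: (k \in l). lra. rewrite Rminus_diag Rabs_R0; apply Rabs_pos. }
have H1 := step z i t. have H2 := Lip i z b. have H3 := IH Hu.
replace (f (upd z i t) - f b - (partial f i b * t + sumL l (fun k => partial f k b * (a k - b k))))
  with ((f (upd z i t) - f z - partial f i z * t) + (partial f i z - partial f i b) * t +
        (f z - f b - sumL l (fun k => partial f k b * (a k - b k)))) by ring.
eapply Rle_trans; [apply Rabs_triang|]. eapply Rle_trans; [apply Rplus_le_compat_r; apply Rabs_triang|].
rewrite Rabs_mult.
have Ht2 : C2 * t ^ 2 <= C2 * Rabs t * N.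
{ have -> : t^2 = Rabs t * Rabs t by rewrite /= Rmult_1_r -Rabs_mult Rabs_right //; apply Rle_ge; nra.
  rewrite -Rmult_assoc. apply Rmult_le_compat_l. apply Rmult_le_pos => //; apply Rabs_pos. done. }
have H4 : Rabs (partial f i z - partial f i b) * Rabs t <= C2 * N * Rabs t.
{ apply Rmult_le_compat_r. apply Rabs_pos. eapply Rle_trans; [apply H2|]. apply Rmult_le_compat_l => //. }
rewrite -/z in H3. lra. Qed.

Lemma quad_deriv (F : R -> R) x l M :
  (forall h, Rabs h <= 1 -> Rabs (F (x + h) - F x - l * h) <= M * h^2) -> is_derive F x l.
Proof. move=> H. apply is_derive_Reals => eps Heps.
set M' := Rabs M + 1. have HM' : 0 < M' by (rewrite /M'; have := Rabs_pos M; lra).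
have Hd : 0 < Rmin 1 (eps / M') by apply Rmin_pos; [lra| apply Rdiv_lt_0_compat].
exists (mkposreal _ Hd) => h Hh0 Hh. simpl in Hh.
have Hh1 : Rabs h <= 1 by apply: Rle_trans (Rlt_le _ _ Hh) (Rmin_l _ _).
have Hh2 : Rabs h < eps / M' by apply: Rlt_le_trans Hh (Rmin_r _ _).
have Hha : 0 < Rabs h by apply Rabs_pos_lt.
replace ((F (x + h) - F x) / h - l) with ((F (x + h) - F x - l * h) / h) by (field; auto).
rewrite Rabs_div //. apply (Rmult_lt_reg_r (Rabs h)) => //. rewrite /Rdiv Rmult_assoc Rinv_l ?Rmult_1_r; last lra.
eapply Rle_lt_trans; [apply H, Hh1|].
have : M * h ^ 2 <= M' * Rabs h * Rabs h.
{ rewrite /= Rmult_1_r. replace (h * h) with (Rabs h * Rabs h).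
  rewrite -Rmult_assoc. apply Rmult_le_compat_r; [lra|]. apply Rmult_le_compat_r; [lra|].
  rewrite /M'; have := Rle_abs M; lra. rewrite -Rabs_mult Rabs_right //; apply Rle_ge; nra. }
have : M' * Rabs h < eps. { apply (Rmult_lt_reg_l (/ M')). by apply Rinv_0_lt_compat.
  rewrite -Rmult_assoc Rinv_l ?Rmult_1_l; last lra. rewrite Rmult_comm; exact Hh2. }
nra. Qed.

Lemma line_deriv f (P : R -> vec d) (p v : vec d) t0 : smooth_bdd f ->
  (forall t i, P t i = p i + t * v i) ->
  is_derive (fun t => f (P t)) t0 (sumI (fun m => partial f m (P t0) * v m)).
Proof. move=> Hf HP. have [K [HK HT]] := taylor2 _ Hf.
set V := sumI (fun k => Rabs (v k)).
apply quad_deriv with (M := K * V^2) => h _.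
have := HT (P (t0 + h)) (P t0).
have E1 : sumI (fun k => partial f k (P t0) * (P (t0 + h) k - P t0 k)) =
   sumI (fun m => partial f m (P t0) * v m) * h.
{ rewrite Rmult_comm -sumI_scal. apply sumI_ext => k; rewrite !HP; ring. }
have E2 : norm1 (P (t0 + h)) (P t0) = Rabs h * V.
{ rewrite /norm1 /V -sumI_scal. apply sumI_ext => k; rewrite !HP -Rabs_mult; f_equal; ring. }
rewrite E1 E2. move=> Hle. eapply Rle_trans; [apply Hle|]. right.
rewrite /= !Rmult_1_r. replace (Rabs h * V * (Rabs h * V)) with ((Rabs h * Rabs h) * (V * V)) by ring.
rewrite -Rabs_mult Rabs_right. ring. apply Rle_ge; nra. Qed.

End Anal.

Section Cont.
Local Open Scope R_scope.
Context {d : nat}.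
Implicit Types (f : vec d -> R).

Definition vc2 f := forall (X : R -> R -> vec d) u v,
  (forall i, continuity_2d_pt (fun a b => X a b i) u v) ->
  continuity_2d_pt (fun a b => f (X a b)) u v.

Definition locLip f := forall z0, exists C, 0 <= C /\
  forall z, norm1 z z0 <= 1 -> Rabs (f z - f z0) <= C * norm1 z z0.

Lemma norm1_diag (z : vec d) : norm1 z z = 0.
Proof. rewrite /norm1 -(@sumI_zero d); apply sumI_ext => k. by rewrite Rminus_diag Rabs_R0. Qed.

Lemma c2_norm1 (X : R -> R -> vec d) z0 u v :
  (forall i, continuity_2d_pt (fun a b => X a b i) u v) ->
  continuity_2d_pt (fun a b => norm1 (X a b) z0) u v.
Proof. move=> HX. apply c2_sumI => k.
apply continuity_1d_2d_pt_comp. apply Rcontinuity_abs.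
apply continuity_2d_pt_minus => //. apply continuity_2d_pt_const. Qed.

Lemma locLip_vc2 f : locLip f -> vc2 f.
Proof. move=> Hf X u v HX eps.
have [C [HC0 HC]] := Hf (X u v).
have Hd : 0 < Rmin 1 (eps / (C + 1)) by apply Rmin_pos; [lra| apply Rdiv_lt_0_compat; [apply cond_pos|lra]].
have [dl Hdl] := c2_norm1 X (X u v) u v HX (mkposreal _ Hd).
exists dl => a b Ha Hb. have := Hdl a b Ha Hb. rewrite norm1_diag Rminus_0_r /=.
have Hn := norm1_ge0 (X a b) (X u v).
rewrite Rabs_right; last lra. move=> Hlt.
have H1 : norm1 (X a b) (X u v) <= 1 by apply: Rle_trans (Rlt_le _ _ Hlt) (Rmin_l _ _).
have H2 : norm1 (X a b) (X u v) < eps / (C + 1) by apply: Rlt_le_trans Hlt (Rmin_r _ _).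
eapply Rle_lt_trans; [apply HC, H1|].
have : (C + 1) * norm1 (X a b) (X u v) < eps.
{ apply (Rmult_lt_reg_l (/ (C+1))). apply Rinv_0_lt_compat; lra.
  rewrite -Rmult_assoc Rinv_l ?Rmult_1_l; last lra. rewrite Rmult_comm; exact H2. }
nra. Qed.

Lemma lip_locLip f C : (forall a b, Rabs (f a - f b) <= C * norm1 a b) -> locLip f.
Proof. move=> H z0. exists (Rabs C); split. apply Rabs_pos. move=> z _.
apply: Rle_trans (H z z0) _. apply Rmult_le_compat_r. apply norm1_ge0. apply Rle_abs. Qed.

Lemma sb_vc2 f : smooth_bdd f -> vc2 f.
Proof. move=> H. have [C [_ HC]] := sb_lip f H. apply locLip_vc2, (lip_locLip _ C HC). Qed.

Lemma vc2_ext f g : (forall z, f z = g z) -> vc2 f -> vc2 g.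
Proof. move=> E H X u v HX. apply: continuity_2d_pt_ext (H X u v HX). move=> a b; apply E. Qed.

Lemma c2_to_cont (g : R -> R -> R) x y : continuity_2d_pt g x y -> continuous (g x) y.
Proof. move=> H. apply/filterlim_locally => eps.
have [dl Hdl] := H eps. exists dl => z Hz. apply Hdl.
 rewrite Rminus_diag Rabs_R0; apply cond_pos. exact Hz. Qed.

Lemma ex_RInt_c2 (g : R -> R) a b : (forall s, continuity_2d_pt (fun _ s => g s) 0 s) -> ex_RInt g a b.
Proof. move=> H. apply: (@ex_RInt_continuous R_CompleteNormedModule) => z _. exact: (c2_to_cont (fun _ s => g s) 0 z (H z)). Qed.

Lemma dui (F F' : R -> R -> R) t0 :
  (forall t s, is_derive (fun u => F u s) t (F' t s)) ->
  (forall t s, continuity_2d_pt F t s) -> (forall t s, continuity_2d_pt F' t s) ->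
  is_derive (fun t => RInt (F t) 0 1) t0 (RInt (F' t0) 0 1).
Proof. move=> HD HF HF'.
have -> : RInt (F' t0) 0 1 = RInt (fun s => Derive (fun u => F u s) t0) 0 1.
{ apply RInt_ext => s _. by rewrite (is_derive_unique _ _ _ (HD t0 s)). }
apply: (is_derive_RInt_param F 0 1 t0).
- apply: filter_forall => t s _. exists (F' t s); apply HD.
- move=> s _. apply: continuity_2d_pt_ext (HF' t0 s). move=> u v; by rewrite (is_derive_unique _ _ _ (HD u v)).
- apply: filter_forall => t. apply: (@ex_RInt_continuous R_CompleteNormedModule) => z _. exact: (c2_to_cont F t z (HF t z)). Qed.

Definition GoodI (H : R -> vec d -> R) :=
 (forall z0, exists M, 0 <= M /\ forall t, 0 <= t <= 1 -> Rabs (H t z0) <= M) /\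
 (forall z0, exists C, 0 <= C /\ forall z, norm1 z z0 <= 1 -> forall t, 0 <= t <= 1 ->
     Rabs (H t z - H t z0) <= C * norm1 z z0).

Lemma GoodI_ext H H' : (forall t z, H t z = H' t z) -> GoodI H -> GoodI H'.
Proof. move=> E [H1 H2]; split.
 move=> z0; have [M [HM HB]] := H1 z0; exists M; split => // t Ht; rewrite -E; auto.
 move=> z0; have [C [HC HB]] := H2 z0; exists C; split => // z Hz t Ht; rewrite -!E; auto. Qed.

Lemma GoodI_cst (c : R -> R) M : (forall t, 0 <= t <= 1 -> Rabs (c t) <= M) -> GoodI (fun t _ => c t).
Proof. move=> H; split.
 move=> z0; exists (Rabs M); split; [apply Rabs_pos|] => t Ht; apply: Rle_trans (H t Ht) (Rle_abs _).
 move=> z0; exists 0; split; [lra|] => z _ t _. rewrite Rminus_diag Rabs_R0; lra. Qed.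

Lemma GoodI_coord l : GoodI (fun _ z => z l).
Proof. split.
 move=> z0; exists (Rabs (z0 l)); split; [apply Rabs_pos|] => t _; lra.
 move=> z0; exists 1; split; [lra|] => z _ t _. rewrite Rmult_1_l; apply norm1_term. Qed.

Lemma GoodI_plus H1 H2 : GoodI H1 -> GoodI H2 -> GoodI (fun t z => H1 t z + H2 t z).
Proof. move=> [A1 B1] [A2 B2]; split.
- move=> z0; have [M1 [HM1 HB1]] := A1 z0; have [M2 [HM2 HB2]] := A2 z0.
  exists (M1 + M2); split; [lra|] => t Ht.
  apply: Rle_trans (Rabs_triang _ _) _. have := HB1 t Ht; have := HB2 t Ht; lra.
- move=> z0; have [C1 [HC1 HB1]] := B1 z0; have [C2 [HC2 HB2]] := B2 z0.
  exists (C1 + C2); split; [lra|] => z Hz t Ht.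
  replace (H1 t z + H2 t z - (H1 t z0 + H2 t z0)) with ((H1 t z - H1 t z0) + (H2 t z - H2 t z0)) by ring.
  apply: Rle_trans (Rabs_triang _ _) _. have := HB1 z Hz t Ht; have := HB2 z Hz t Ht; lra. Qed.

Lemma GoodI_mult H1 H2 : GoodI H1 -> GoodI H2 -> GoodI (fun t z => H1 t z * H2 t z).
Proof. move=> [A1 B1] [A2 B2]; split.
- move=> z0; have [M1 [HM1 HB1]] := A1 z0; have [M2 [HM2 HB2]] := A2 z0.
  exists (M1 * M2); split; [apply Rmult_le_pos; lra|] => t Ht. rewrite Rabs_mult.
  apply Rmult_le_compat; try apply Rabs_pos; auto.
- move=> z0; have [M1 [HM1 HA1]] := A1 z0; have [M2 [HM2 HA2]] := A2 z0.
  have [C1 [HC1 HB1]] := B1 z0; have [C2 [HC2 HB2]] := B2 z0.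
  exists (C1 * (M2 + C2) + M1 * C2); split; [apply Rplus_le_le_0_compat; apply Rmult_le_pos; lra|] => z Hz t Ht.
  have Hn := norm1_ge0 z z0.
  replace (H1 t z * H2 t z - H1 t z0 * H2 t z0) with
   ((H1 t z - H1 t z0) * H2 t z + H1 t z0 * (H2 t z - H2 t z0)) by ring.
  apply: Rle_trans (Rabs_triang _ _) _. rewrite !Rabs_mult.
  have e1 := HB1 z Hz t Ht. have e2 := HB2 z Hz t Ht. have e3 := HA1 t Ht. have e4 := HA2 t Ht.
  have e5 : Rabs (H2 t z) <= M2 + C2.
  { replace (H2 t z) with (H2 t z0 + (H2 t z - H2 t z0)) by ring.
    apply: Rle_trans (Rabs_triang _ _) _. have : C2 * norm1 z z0 <= C2 * 1 by apply Rmult_le_compat_l. lra. }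
  have p1 := Rabs_pos (H1 t z - H1 t z0). have p2 := Rabs_pos (H2 t z).
  have p3 := Rabs_pos (H1 t z0). have p4 := Rabs_pos (H2 t z - H2 t z0).
  have q1 : Rabs (H1 t z - H1 t z0) * Rabs (H2 t z) <= C1 * norm1 z z0 * (M2 + C2).
  { apply Rmult_le_compat; auto. }
  have q2 : Rabs (H1 t z0) * Rabs (H2 t z - H2 t z0) <= M1 * (C2 * norm1 z z0).
  { apply Rmult_le_compat; auto. }
  nra. Qed.

Lemma GoodI_zero : GoodI (fun _ _ => 0).
Proof. apply (GoodI_cst (fun _ => 0) 0) => t _; rewrite Rabs_R0; lra. Qed.

Lemma GoodI_sumI (H : 'I_d -> R -> vec d -> R) : (forall i, GoodI (H i)) ->
  GoodI (fun t z => sumI (fun i => H i t z)).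
Proof. move=> HG; rewrite /sumI. elim: (enum 'I_d) => [|a l IH] /=.
 apply GoodI_zero. by apply: (GoodI_plus (H a)). Qed.

Lemma GoodI_comp (b : vec d -> R) L : (forall a a', Rabs (b a - b a') <= L * norm1 a a') ->
  GoodI (fun t z => b (fun i => t * z i)).
Proof. move=> Hb.
have HL : forall a a' : vec d, 0 <= Rabs L * norm1 a a' by move=> a a'; apply Rmult_le_pos; [apply Rabs_pos|apply norm1_ge0].
have Hb' : forall a a' : vec d, Rabs (b a - b a') <= Rabs L * norm1 a a'.
{ move=> a a'; apply: Rle_trans (Hb a a') _; apply Rmult_le_compat_r; [apply norm1_ge0|apply Rle_abs]. }
have Hsc : forall t (z z0 : vec d), 0 <= t <= 1 -> norm1 (fun i => t * z i) (fun i => t * z0 i) <= norm1 z z0.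
{ move=> t z z0 Ht. apply sumI_le => k. replace (t * z k - t * z0 k) with (t * (z k - z0 k)) by ring.
  rewrite Rabs_mult Rabs_right; last lra. have := Rabs_pos (z k - z0 k); nra. }
have H0 : forall t (z0 : vec d), 0 <= t <= 1 -> norm1 (fun i => t * z0 i) (fun i => t * 0) <= norm1 z0 (fun _ => 0).
{ move=> t z0 Ht; exact: (Hsc t z0 (fun _ => 0) Ht). }
split.
- move=> z0. exists (Rabs (b (fun _ => 0)) + Rabs L * norm1 z0 (fun _ => 0)); split.
  have := Rabs_pos (b (fun _ => 0)); have := HL z0 (fun _ => 0); lra.
  move=> t Ht. have E : (fun i : 'I_d => t * 0) = (fun _ => 0) by apply functional_extensionality => i; ring.
  replace (b (fun i => t * z0 i)) with (b (fun _ => 0) + (b (fun i => t * z0 i) - b (fun i => t * 0))) by (rewrite E; ring).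
  apply: Rle_trans (Rabs_triang _ _) _. apply Rplus_le_compat_l.
  apply: Rle_trans (Hb' _ _) _. apply Rmult_le_compat_l; [apply Rabs_pos|]. rewrite -E in H0 *. by apply H0.
- move=> z0; exists (Rabs L); split; [apply Rabs_pos|] => z _ t Ht.
  apply: Rle_trans (Hb' _ _) _. apply Rmult_le_compat_l; [apply Rabs_pos|]. by apply Hsc. Qed.

Lemma GoodI_RInt H : GoodI H -> (forall z, ex_RInt (fun t => H t z) 0 1) ->
  locLip (fun z => RInt (fun t => H t z) 0 1).
Proof. move=> [_ HB] HE z0. have [C [HC HL]] := HB z0. exists C; split => // z Hz.
have E := RInt_minus (fun t => H t z) (fun t => H t z0) 0 1 (HE z) (HE z0).
rewrite /minus /plus /opp /= in E. rewrite /Rminus -E.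
have := abs_RInt_le_const (fun t => H t z + - H t z0) 0 1 (C * norm1 z z0).
rewrite Rminus_0_r Rmult_1_l. move=> X; apply: X. lra.
apply: (ex_RInt_minus (fun t => H t z) (fun t => H t z0)); [apply HE|apply HE].
move=> t Ht; exact: (HL z Hz t Ht). Qed.

End Cont.

Section Gauge.
Local Open Scope R_scope.
Context {d : nat} (B : 'I_d -> 'I_d -> vec d -> R) (hB : magnetic_field B).

Lemma hsb j k : smooth_bdd (B j k). Proof. exact: (proj1 hB j k). Qed.
Lemma hsb1 j k m : smooth_bdd (partial (B j k) m). Proof. apply sb_partial, hsb. Qed.

Lemma c2B j k (X : R -> R -> vec d) u v : (forall i, continuity_2d_pt (fun a b => X a b i) u v) ->
  continuity_2d_pt (fun a b => B j k (X a b)) u v.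
Proof. apply: sb_vc2; apply hsb. Qed.
Lemma c2dB j k m (X : R -> R -> vec d) u v : (forall i, continuity_2d_pt (fun a b => X a b i) u v) ->
  continuity_2d_pt (fun a b => partial (B j k) m (X a b)) u v.
Proof. apply: sb_vc2; apply hsb1. Qed.

Ltac c2 := repeat first [ apply continuity_2d_pt_plus | apply continuity_2d_pt_minus
  | apply continuity_2d_pt_mult | apply continuity_2d_pt_opp | apply continuity_2d_pt_id1
  | apply continuity_2d_pt_id2 | apply continuity_2d_pt_const | apply c2_sumI => ?
  | apply c2B => ? | apply c2dB => ? ].

Ltac rring := match goal with |- ?a = ?b => change (@eq R a b); ring end.

Definition AgI j (P Q : vec d) (s : R) : R :=
  sumI (fun k => s * (P k - Q k) * B j k (fun i => Q i + s * (P i - Q i))).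

Lemma Agauge_RInt j P Q : Agauge B j P Q = - RInt (AgI j P Q) 0 1.
Proof. rewrite /Agauge /AgI. f_equal. symmetry.
apply: (proj2 (RInt_sumI (fun k s => s * (P k - Q k) * B j k (fun i => Q i + s * (P i - Q i))) 0 1 _)).
move=> k. apply ex_RInt_c2 => s. c2. Qed.


Definition AgD j (P Q v u : vec d) (s : R) : R :=
  sumI (fun k => s * (v k - u k) * B j k (fun i => Q i + s * (P i - Q i)) +
    s * (P k - Q k) * sumI (fun m => partial (B j k) m (fun i => Q i + s * (P i - Q i)) * (u m + s * (v m - u m)))).

Lemma is_derive_mult' (f g : R -> R) x df dg : is_derive f x df -> is_derive g x dg ->
  is_derive (fun t => f t * g t) x (df * g x + f x * dg).
Proof. move=> Hf Hg. have := is_derive_mult f g x df dg Hf Hg (fun n m => Rmult_comm n m).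
by rewrite /plus /mult /=. Qed.

Lemma is_derive_aff (c a b t : R) : is_derive (fun t => c * (a + t * b)) t (c * b).
Proof. auto_derive; [auto| ring]. Qed.

Lemma Ag_line j (P Q : R -> vec d) (p q v u : vec d) t0 :
  (forall t i, P t i = p i + t * v i) -> (forall t i, Q t i = q i + t * u i) ->
  is_derive (fun t => Agauge B j (P t) (Q t)) t0 (- RInt (AgD j (P t0) (Q t0) v u) 0 1).
Proof. move=> HP HQ.
have -> : P = (fun t i => p i + t * v i) by do 2 (apply functional_extensionality => ?); apply HP.
have -> : Q = (fun t i => q i + t * u i) by do 2 (apply functional_extensionality => ?); apply HQ.
apply: (is_derive_ext (fun t => - RInt (AgI j (fun i => p i + t * v i) (fun i => q i + t * u i)) 0 1)).
  move=> t; by rewrite Agauge_RInt.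
apply: is_derive_opp.
apply: (dui (fun t s => AgI j (fun i => p i + t * v i) (fun i => q i + t * u i) s)
            (fun t s => AgD j (fun i => p i + t * v i) (fun i => q i + t * u i) v u s)).
- move=> t s. rewrite /AgI /AgD. apply is_derive_sumI => k.
  apply: is_derive_mult'.
  + apply: (is_derive_ext (fun t => s * ((p k - q k) + t * (v k - u k)))). move=> t'; rring.
    apply is_derive_aff.
  + apply: (line_deriv (B j k) _ (fun i => q i + s * (p i - q i)) (fun i => u i + s * (v i - u i))).
    apply hsb. move=> t' i; ring.
- move=> t s. rewrite /AgI. c2.
- move=> t s. rewrite /AgD. c2. Qed.

Definition Gf k (z v : vec d) : R := - RInt (AgD k z zerov v zerov) 0 1.

Lemma A0_line k (P : R -> vec d) (p v : vec d) t0 :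
  (forall t i, P t i = p i + t * v i) ->
  is_derive (fun t => A0 B k (P t)) t0 (Gf k (P t0) v).
Proof. move=> HP. rewrite /A0 /Gf.
apply: (Ag_line k P (fun _ => zerov) p zerov v zerov t0 HP). move=> t i; rewrite /zerov; ring. Qed.

Lemma ex_RInt_AgD j P Q v u : ex_RInt (AgD j P Q v u) 0 1.
Proof. apply ex_RInt_c2 => s. rewrite /AgD. c2. Qed.

Lemma ex_RInt_AgI j P Q : ex_RInt (AgI j P Q) 0 1.
Proof. apply ex_RInt_c2 => s. rewrite /AgI. c2. Qed.

Lemma RInt_lin2 (f g : R -> R) a b : ex_RInt f 0 1 -> ex_RInt g 0 1 ->
  RInt (fun s => a * f s + b * g s) 0 1 = a * RInt f 0 1 + b * RInt g 0 1.
Proof. move=> Hf Hg.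
have Hf' : ex_RInt (fun s => scal a (f s)) 0 1 by apply: ex_RInt_scal.
have Hg' : ex_RInt (fun s => scal b (g s)) 0 1 by apply: ex_RInt_scal.
have := RInt_plus _ _ 0 1 Hf' Hg'. rewrite !RInt_scal //; by rewrite /plus /scal /= /mult /=. Qed.

Lemma Gf_lin k z a b v1 v2 :
  Gf k z (fun i => a * v1 i + b * v2 i) = a * Gf k z v1 + b * Gf k z v2.
Proof. rewrite /Gf.
have -> : AgD k z zerov (fun i => a * v1 i + b * v2 i) zerov =
   (fun s => a * AgD k z zerov v1 zerov s + b * AgD k z zerov v2 zerov s).
{ apply functional_extensionality => s. rewrite /AgD -!sumI_scal -sumI_plus. apply sumI_ext => l.
  have E : forall w : vec d, sumI (fun m => partial (B k l) m (fun i => zerov i + s * (z i - zerov i)) * (zerov m + s * (w m - zerov m)))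
     = s * sumI (fun m => partial (B k l) m (fun i => zerov i + s * (z i - zerov i)) * w m).
  { move=> w; rewrite -sumI_scal; apply sumI_ext => m; rewrite /zerov; ring. }
  rewrite !E. rewrite /zerov; ring_simplify.
  have -> : sumI (fun m => partial (B k l) m (fun i => 0 + s * (z i - 0)) * (a * v1 m + b * v2 m)) =
     a * sumI (fun m => partial (B k l) m (fun i => 0 + s * (z i - 0)) * v1 m) +
     b * sumI (fun m => partial (B k l) m (fun i => 0 + s * (z i - 0)) * v2 m).
  { rewrite -!sumI_scal -sumI_plus; apply sumI_ext => m; ring. }
  ring. }
rewrite RInt_lin2; [ring|apply ex_RInt_AgD|apply ex_RInt_AgD]. Qed.

Lemma Gf_zero k z : Gf k z zerov = 0.
Proof. rewrite /Gf. have -> : AgD k z zerov zerov zerov = (fun _ => 0).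
{ apply functional_extensionality => s. rewrite /AgD -(@sumI_zero d). apply sumI_ext => l.
  have -> : sumI (fun m => partial (B k l) m (fun i => zerov i + s * (z i - zerov i)) * (zerov m + s * (zerov m - zerov m))) = 0.
  { rewrite -(@sumI_zero d); apply sumI_ext => m; rewrite /zerov; ring. }
  rewrite /zerov; ring. }
rewrite RInt_const /scal /= /mult /=; ring. Qed.

End Gauge.

Section Phi.
Local Open Scope R_scope.
Context {d : nat} (B : 'I_d -> 'I_d -> vec d -> R) (hB : magnetic_field B).

Ltac rring := match goal with |- ?a = ?b => change (@eq R a b); ring end.
Ltac c2 := repeat first [ apply continuity_2d_pt_plus | apply continuity_2d_pt_minus
  | apply continuity_2d_pt_mult | apply continuity_2d_pt_opp | apply continuity_2d_pt_id1
  | apply continuity_2d_pt_id2 | apply continuity_2d_pt_const | apply c2_sumI => ?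
  | apply (c2B B hB) => ? | apply (c2dB B hB) => ? ].

Lemma GoodI_id : GoodI (fun t (_ : vec d) => t).
Proof. apply (GoodI_cst (fun t => t) 1) => t Ht; rewrite Rabs_right; lra. Qed.
Lemma GoodI_const c : GoodI (fun _ (_ : vec d) => c).
Proof. apply (GoodI_cst (fun _ => c) (Rabs c)) => t Ht; lra. Qed.
Lemma GoodI_minus (H1 H2 : R -> vec d -> R) : GoodI H1 -> GoodI H2 -> GoodI (fun t z => H1 t z - H2 t z).
Proof. move=> G1 G2. apply: (GoodI_ext (fun t z => H1 t z + (-1) * H2 t z)). move=> t z; ring.
apply GoodI_plus => //. apply GoodI_mult => //. apply GoodI_const. Qed.

Lemma zform (b : vec d -> R) t (z : vec d) : b (fun i => zerov i + t * (z i - zerov i)) = b (fun i => t * z i).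
Proof. f_equal; apply functional_extensionality => i; rewrite /zerov; ring. Qed.

Lemma GoodI_sbz (b : vec d -> R) : smooth_bdd b -> GoodI (fun t z => b (fun i => zerov i + t * (z i - zerov i))).
Proof. move=> H. have [L [_ HL]] := sb_lip b H.
apply: (GoodI_ext (fun t z => b (fun i => t * z i))). move=> t z; by rewrite zform.
exact: (GoodI_comp b L HL). Qed.

Lemma GoodI_Bz j k : GoodI (fun t z => B j k (fun i => zerov i + t * (z i - zerov i))).
Proof. apply GoodI_sbz, (hsb B hB). Qed.
Lemma GoodI_dBz j k m : GoodI (fun t z => partial (B j k) m (fun i => zerov i + t * (z i - zerov i))).
Proof. apply GoodI_sbz, (hsb1 B hB). Qed.

Ltac good := repeat first [ apply GoodI_sumI => ? | apply GoodI_plus | apply GoodI_minus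
  | apply GoodI_const | apply GoodI_id | apply GoodI_coord | apply GoodI_Bz | apply GoodI_dBz
  | apply GoodI_mult ].

Lemma vc2_opp (f : vec d -> R) : vc2 f -> vc2 (fun z => - f z).
Proof. move=> H X u v HX. apply continuity_2d_pt_opp. by apply H. Qed.

Lemma vc2_A0 k : vc2 (A0 B k).
Proof. apply: (vc2_ext (fun z => - RInt (fun t => AgI B k z zerov t) 0 1)).
 move=> z; by rewrite /A0 Agauge_RInt.
apply vc2_opp, locLip_vc2. apply: (GoodI_RInt (fun t z => AgI B k z zerov t)).
 rewrite /AgI; good. move=> z; apply ex_RInt_AgI, hB. Qed.

Lemma vc2_Gf k v : vc2 (fun z => Gf B k z v).
Proof. rewrite /Gf. apply vc2_opp, locLip_vc2. apply: (GoodI_RInt (fun t z => AgD B k z zerov v zerov t)).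
 rewrite /AgD; good. move=> z; apply ex_RInt_AgD, hB. Qed.

Lemma c2A0 k (X : R -> R -> vec d) u v : (forall i, continuity_2d_pt (fun a b => X a b i) u v) ->
  continuity_2d_pt (fun a b => A0 B k (X a b)) u v.
Proof. apply vc2_A0. Qed.
Lemma c2Gf k w (X : R -> R -> vec d) u v : (forall i, continuity_2d_pt (fun a b => X a b i) u v) ->
  continuity_2d_pt (fun a b => Gf B k (X a b) w) u v.
Proof. move=> H; exact: (vc2_Gf k w X u v H). Qed.

Ltac c2' := repeat first [ apply c2A0 => ? | apply c2Gf => ? | apply continuity_2d_pt_plus | apply continuity_2d_pt_minus
  | apply continuity_2d_pt_mult | apply continuity_2d_pt_opp | apply continuity_2d_pt_id1
  | apply continuity_2d_pt_id2 | apply continuity_2d_pt_const | apply c2_sumI => ?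
  | apply (c2B B hB) => ? | apply (c2dB B hB) => ? ].

Lemma is_derive_aff2 (a b t : R) : is_derive (fun t => a + t * b) t b.
Proof. auto_derive; [auto| ring]. Qed.

Lemma phi_line (Y X : R -> vec d) (y x vy vx : vec d) t0 :
  (forall t i, Y t i = y i + t * vy i) -> (forall t i, X t i = x i + t * vx i) ->
  is_derive (fun t => phiA B (Y t) (X t)) t0
   (sumI (fun k => (vy k - vx k) * RInt (fun s => A0 B k (fun i => (1 - s) * X t0 i + s * Y t0 i)) 0 1
     + (Y t0 k - X t0 k) * RInt (fun s => (1 - s) * Gf B k (fun i => (1 - s) * X t0 i + s * Y t0 i) vx
                                      + s * Gf B k (fun i => (1 - s) * X t0 i + s * Y t0 i) vy) 0 1)).
Proof. move=> HY HX.
have -> : Y = (fun t i => y i + t * vy i) by do 2 (apply functional_extensionality => ?); apply HY.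
have -> : X = (fun t i => x i + t * vx i) by do 2 (apply functional_extensionality => ?); apply HX.
rewrite /phiA. apply is_derive_sumI => k. apply: is_derive_mult'.
- apply: (is_derive_ext (fun t => (y k - x k) + t * (vy k - vx k))). move=> t; rring.
  apply is_derive_aff2.
- apply: (dui (fun t s => A0 B k (fun i => (1 - s) * (x i + t * vx i) + s * (y i + t * vy i)))
   (fun t s => (1 - s) * Gf B k (fun i => (1 - s) * (x i + t * vx i) + s * (y i + t * vy i)) vx
     + s * Gf B k (fun i => (1 - s) * (x i + t * vx i) + s * (y i + t * vy i)) vy)).
  + move=> t s. rewrite -Gf_lin.
    apply: (A0_line B hB k _ (fun i => (1 - s) * x i + s * y i)). move=> t' i; ring. exact hB.
  + move=> t s. c2'.
  + move=> t s. c2'. Qed.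

End Phi.

Section Curl.
Local Open Scope R_scope.
Context {d : nat} (B : 'I_d -> 'I_d -> vec d -> R) (hB : magnetic_field B).

Ltac rring := match goal with |- ?a = ?b => change (@eq R a b); ring end.
Ltac c2' := repeat first [ apply (c2A0 B hB) => ? | apply (c2Gf B hB) => ? | apply continuity_2d_pt_plus
  | apply continuity_2d_pt_minus
  | apply continuity_2d_pt_mult | apply continuity_2d_pt_opp | apply continuity_2d_pt_id1
  | apply continuity_2d_pt_id2 | apply continuity_2d_pt_const | apply c2_sumI => ?
  | apply (c2B B hB) => ? | apply (c2dB B hB) => ? ].

Definition Xz (z : vec d) (t : R) : vec d := fun i => zerov i + t * (z i - zerov i).

Lemma B_anti j k z : B j k z = - B k j z. Proof. exact: (proj1 (proj2 hB)). Qed.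

Lemma dB_anti k l m z : partial (B k l) m z = - partial (B l k) m z.
Proof. rewrite /partial -Derive_opp. apply Derive_ext => t. apply B_anti. Qed.

Lemma curl_pt j k l z : partial (B j l) k z - partial (B k l) j z = partial (B j k) l z.
Proof. have := proj2 (proj2 hB) l j k z. rewrite (dB_anti l j k). lra. Qed.

Lemma AgD_e j k z t : AgD B k z zerov (ev j) zerov t =
  t * B k j (Xz z t) + sumI (fun l => t * t * z l * partial (B k l) j (Xz z t)).
Proof. rewrite /AgD -/(Xz z t).
have E1 : forall l, sumI (fun m => partial (B k l) m (Xz z t) * (zerov m + t * (ev j m - zerov m)))
   = t * partial (B k l) j (Xz z t).
{ move=> l. rewrite -(sumI_delta (fun m => t * partial (B k l) m (Xz z t)) j).
  apply sumI_ext => m. rewrite /zerov /ev. ring. }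
transitivity (sumI (fun l => (t * B k l (Xz z t)) * (if l == j then 1 else 0)
     + t * t * z l * partial (B k l) j (Xz z t))).
{ apply sumI_ext => l. rewrite E1 /ev /zerov. ring. }
by rewrite sumI_plus sumI_delta. Qed.

Lemma AgD_w j z (w : vec d) t : AgD B j z zerov w zerov t =
  sumI (fun k => t * w k * B j k (Xz z t)) +
  sumI (fun k => w k * sumI (fun l => t * t * z l * partial (B j l) k (Xz z t))).
Proof. rewrite /AgD -/(Xz z t).
transitivity (sumI (fun l => t * w l * B j l (Xz z t) +
   sumI (fun m => w m * (t * t * z l * partial (B j l) m (Xz z t))))).
{ apply sumI_ext => l. rewrite /zerov.
  have -> : t * (z l - 0) * sumI (fun m => partial (B j l) m (Xz z t) * (0 + t * (w m - 0))) =
     sumI (fun m => w m * (t * t * z l * partial (B j l) m (Xz z t))).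
  { rewrite -sumI_scal. apply sumI_ext => m. ring. }
  ring. }
rewrite sumI_plus sumI_swap. f_equal. apply sumI_ext => k. by rewrite sumI_scal. Qed.

Lemma curl_int j z (w : vec d) t :
  AgD B j z zerov w zerov t - sumI (fun k => w k * AgD B k z zerov (ev j) zerov t) =
  2 * t * sumI (fun k => w k * B j k (Xz z t)) +
  t * t * sumI (fun k => w k * sumI (fun m => partial (B j k) m (Xz z t) * (z m - zerov m))).
Proof. rewrite AgD_w.
rewrite (sumI_ext (fun k => w k * AgD B k z zerov (ev j) zerov t)
  (fun k => w k * (t * B k j (Xz z t) + sumI (fun l => t * t * z l * partial (B k l) j (Xz z t))))); last first.
{ move=> k; by rewrite AgD_e. }
rewrite -sumI_plus -sumI_minus -!sumI_scal -sumI_plus. apply sumI_ext => k.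
have E : sumI (fun l => t * t * z l * partial (B j l) k (Xz z t)) -
         sumI (fun l => t * t * z l * partial (B k l) j (Xz z t)) =
         t * t * sumI (fun m => partial (B j k) m (Xz z t) * (z m - zerov m)).
{ rewrite -sumI_minus -sumI_scal. apply sumI_ext => l. rewrite -(curl_pt j k l) /zerov. ring. }
rewrite (B_anti k j).
have -> : t * t * (w k * sumI (fun m => partial (B j k) m (Xz z t) * (z m - zerov m))) =
   w k * (t * t * sumI (fun m => partial (B j k) m (Xz z t) * (z m - zerov m))) by ring.
rewrite -E. ring. Qed.

Lemma is_derive_sq (t : R) : is_derive (fun t => t * t) t (2 * t).
Proof. auto_derive; [auto|ring]. Qed.

Lemma is_derive_cmul (f : R -> R) c x df : is_derive f x df -> is_derive (fun t => c * f t) x (c * df).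
Proof. move=> H. have := is_derive_scal f x c df H. by rewrite /scal /= /mult /=. Qed.

Lemma curl_RInt j z (w : vec d) :
  RInt (fun t => AgD B j z zerov w zerov t - sumI (fun k => w k * AgD B k z zerov (ev j) zerov t)) 0 1
  = sumI (fun k => w k * B j k z).
Proof. rewrite (RInt_ext _ (fun t => 2 * t * sumI (fun k => w k * B j k (Xz z t)) +
  t * t * sumI (fun k => w k * sumI (fun m => partial (B j k) m (Xz z t) * (z m - zerov m))))); last first.
{ move=> t _; apply curl_int. }
have HD : forall t, is_derive (fun t => t * t * sumI (fun k => w k * B j k (Xz z t))) t
  (2 * t * sumI (fun k => w k * B j k (Xz z t)) +
  t * t * sumI (fun k => w k * sumI (fun m => partial (B j k) m (Xz z t) * (z m - zerov m)))).
{ move=> t. apply: is_derive_mult'. apply is_derive_sq.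
  apply is_derive_sumI => k. apply is_derive_cmul.
  apply: (line_deriv (B j k) (Xz z) zerov (fun i => z i - zerov i)); try (by apply (hsb B hB)); try done. }
have := is_RInt_derive _ _ 0 1 (fun t _ => HD t).
move=> /(_ _) H. apply is_RInt_unique in H; last first.
{ move=> t _. apply: (c2_to_cont (fun _ t => 2 * t * sumI (fun k => w k * B j k (Xz z t)) +
  t * t * sumI (fun k => w k * sumI (fun m => partial (B j k) m (Xz z t) * (z m - zerov m)))) 0).
  rewrite /Xz. c2'. }
rewrite H /minus /plus /opp /=.
have -> : Xz z 1 = z by apply functional_extensionality => i; rewrite /Xz /zerov; ring.
ring. Qed.

Lemma RInt_cmul (f : R -> R) c a b : ex_RInt f a b -> RInt (fun x => c * f x) a b = c * RInt f a b.
Proof. move=> H; exact: (RInt_scal f a b c H). Qed.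
Lemma ex_RInt_cmul (f : R -> R) c a b : ex_RInt f a b -> ex_RInt (fun x => c * f x) a b.
Proof. move=> H; exact: (ex_RInt_scal f a b c H). Qed.
Lemma RInt_minus' (f g : R -> R) a b : ex_RInt f a b -> ex_RInt g a b ->
  RInt (fun x => f x - g x) a b = RInt f a b - RInt g a b.
Proof. move=> Hf Hg; exact: (RInt_minus f g a b Hf Hg). Qed.
Lemma RInt_plus' (f g : R -> R) a b : ex_RInt f a b -> ex_RInt g a b ->
  RInt (fun x => f x + g x) a b = RInt f a b + RInt g a b.
Proof. move=> Hf Hg; exact: (RInt_plus f g a b Hf Hg). Qed.

Lemma Gf_curl j z (w : vec d) :
  sumI (fun k => w k * Gf B k z (ev j)) = Gf B j z w + sumI (fun k => w k * B j k z).
Proof.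
have Hex : forall k, ex_RInt (fun t => w k * AgD B k z zerov (ev j) zerov t) 0 1.
{ move=> k; apply ex_RInt_cmul, (ex_RInt_AgD B hB). }
have [HS1 HS2] := RInt_sumI (fun k t => w k * AgD B k z zerov (ev j) zerov t) 0 1 Hex.
have E1 : sumI (fun k => w k * Gf B k z (ev j)) =
  - RInt (fun t => sumI (fun k => w k * AgD B k z zerov (ev j) zerov t)) 0 1.
{ rewrite HS2 -sumI_opp. apply sumI_ext => k. rewrite /Gf RInt_cmul; [ring|apply (ex_RInt_AgD B hB)]. }
rewrite E1 -curl_RInt RInt_minus' //; last by apply (ex_RInt_AgD B hB).
rewrite /Gf. ring. Qed.

Lemma A0_ftc j (x y : vec d) :
  RInt (fun s => Gf B j (fun i => (1 - s) * x i + s * y i) (fun i => y i - x i)) 0 1 = A0 B j y - A0 B j x.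
Proof.
have HD : forall s, is_derive (fun s => A0 B j (fun i => (1 - s) * x i + s * y i)) s
   (Gf B j (fun i => (1 - s) * x i + s * y i) (fun i => y i - x i)).
{ move=> s. apply: (A0_line B hB j _ x). move=> t i; ring. }
have := is_RInt_derive _ _ 0 1 (fun t _ => HD t). move=> /(_ _) H. apply is_RInt_unique in H; last first.
{ move=> t _. apply: (c2_to_cont (fun _ s => Gf B j (fun i => (1 - s) * x i + s * y i) (fun i => y i - x i)) 0).
  c2'. }
rewrite H /minus /plus /opp /=.
have -> : (fun i => (1 - 1) * x i + 1 * y i) = y by apply functional_extensionality => i; ring.
have -> : (fun i => (1 - 0) * x i + 0 * y i) = x by apply functional_extensionality => i; ring.
ring. Qed.

End Curl.

Section Key.
Local Open Scope R_scope.
Context {d : nat} (B : 'I_d -> 'I_d -> vec d -> R) (hB : magnetic_field B).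

Ltac rring := match goal with |- ?a = ?b => change (@eq R a b); ring end.
Ltac c2' := repeat first [ apply (c2A0 B hB) => ? | apply (c2Gf B hB) => ? | apply continuity_2d_pt_plus
  | apply continuity_2d_pt_minus
  | apply continuity_2d_pt_mult | apply continuity_2d_pt_opp | apply continuity_2d_pt_id1
  | apply continuity_2d_pt_id2 | apply continuity_2d_pt_const | apply c2_sumI => ?
  | apply (c2B B hB) => ? | apply (c2dB B hB) => ? ].

Lemma RInt_s c : RInt (fun s => s * c) 0 1 = c / 2.
Proof.
have HD : forall s, is_derive (fun s => s * s / 2 * c) s (s * c) by move=> s; auto_derive; [auto|field].
have := is_RInt_derive _ _ 0 1 (fun t _ => HD t). move=> /(_ _) H. apply is_RInt_unique in H.
 rewrite H /minus /plus /opp /=. field.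
move=> t _. apply: (c2_to_cont (fun _ s => s * c) 0). apply continuity_2d_pt_mult.
 apply continuity_2d_pt_id2. apply continuity_2d_pt_const. Qed.

Lemma Ag_xx j (x : vec d) : Agauge B j x x = 0.
Proof. rewrite /Agauge -(@sumI_zero d) -sumI_opp. apply sumI_ext => k.
rewrite (RInt_ext _ (fun _ => 0)). rewrite RInt_const /scal /= /mult /=; ring.
move=> s _; rring. Qed.

Lemma Ag_p1 j i (x : vec d) : partial (fun z => Agauge B j z x) i x = - (B j i x / 2).
Proof. rewrite /partial. apply is_derive_unique.
have := Ag_line B hB j (fun t => upd x i t) (fun _ => x) x x (ev i) zerov 0 (upd_lin x i)
  (fun t i' => ltac:(rewrite /zerov; ring)).
rewrite upd0. rewrite (RInt_ext _ (fun s => s * B j i x)) ?RInt_s //.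
move=> s _. rewrite /AgD.
have -> : (fun i0 => x i0 + s * (x i0 - x i0)) = x by apply functional_extensionality => i0; ring.
rewrite -(sumI_delta (fun k => s * B j k x) i). apply sumI_ext => k. rewrite /ev /zerov. ring. Qed.

Lemma Ag_p2 j i (x : vec d) : partial (fun z => Agauge B j x z) i x = B j i x / 2.
Proof. rewrite /partial. apply is_derive_unique.
have := Ag_line B hB j (fun _ => x) (fun t => upd x i t) x x zerov (ev i) 0
  (fun t i' => ltac:(rewrite /zerov; ring)) (upd_lin x i).
rewrite upd0. rewrite (RInt_ext _ (fun s => s * (- B j i x))) ?RInt_s; last first.
{ move=> s _. rewrite /AgD.
  have -> : (fun i0 => x i0 + s * (x i0 - x i0)) = x by apply functional_extensionality => i0; ring.
  rewrite -(sumI_delta (fun k => s * - B j k x) i). apply sumI_ext => k. rewrite /ev /zerov. ring. }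
move=> H. by replace (B j i x / 2) with (- (- B j i x / 2)) by field. Qed.

Lemma Ag_diff j (x y : vec d) : Agauge B j x y - Agauge B j y x =
  RInt (fun s => sumI (fun k => (y k - x k) * B j k (fun i => (1 - s) * x i + s * y i))) 0 1.
Proof. rewrite !(Agauge_RInt B hB).
have Hf := ex_RInt_AgI B hB j x y.
have H := RInt_comp_lin (AgI B j x y) (-1) 1 0 1.
replace (-1 * 0 + 1) with 1 in H by ring. replace (-1 * 1 + 1) with 0 in H by ring.
have Hf' : ex_RInt (AgI B j x y) 1 0 by apply: ex_RInt_swap.
have Hg : ex_RInt (fun s => AgI B j x y (-1 * s + 1)) 0 1.
{ apply ex_RInt_c2 => s. rewrite /AgI. c2'. }
have EA : RInt (AgI B j x y) 0 1 = RInt (fun s => AgI B j x y (-1 * s + 1)) 0 1.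
{ rewrite -(opp_RInt_swap _ _ _ Hf') -(H Hf'). rewrite (RInt_ext _ (fun s => -1 * AgI B j x y (-1 * s + 1))) //.
  rewrite RInt_cmul // /opp /=; ring. }
rewrite EA.
rewrite (RInt_ext (fun s => AgI B j x y (-1 * s + 1))
   (fun s => sumI (fun k => (1 - s) * (x k - y k) * B j k (fun i => (1 - s) * x i + s * y i)))); last first.
{ move=> s _. rewrite /AgI. apply sumI_ext => k.
  have -> : (fun i => y i + (-1 * s + 1) * (x i - y i)) = (fun i => (1 - s) * x i + s * y i)
    by apply functional_extensionality => i; ring.
  ring. }
rewrite (RInt_ext (AgI B j y x)
   (fun s => sumI (fun k => s * (y k - x k) * B j k (fun i => (1 - s) * x i + s * y i)))); last first.
{ move=> s _. rewrite /AgI. apply sumI_ext => k.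
  have -> : (fun i => x i + s * (y i - x i)) = (fun i => (1 - s) * x i + s * y i)
    by apply functional_extensionality => i; ring.
  ring. }
have E1 : ex_RInt (fun s => sumI (fun k => (1 - s) * (x k - y k) * B j k (fun i => (1 - s) * x i + s * y i))) 0 1.
{ apply ex_RInt_c2 => s. c2'. }
have E2 : ex_RInt (fun s => sumI (fun k => s * (y k - x k) * B j k (fun i => (1 - s) * x i + s * y i))) 0 1.
{ apply ex_RInt_c2 => s. c2'. }
replace (- RInt (fun s => sumI (fun k => (1 - s) * (x k - y k) * B j k (fun i => (1 - s) * x i + s * y i))) 0 1 -
   - RInt (fun s => sumI (fun k => s * (y k - x k) * B j k (fun i => (1 - s) * x i + s * y i))) 0 1)
 with (RInt (fun s => sumI (fun k => s * (y k - x k) * B j k (fun i => (1 - s) * x i + s * y i))) 0 1 -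
       RInt (fun s => sumI (fun k => (1 - s) * (x k - y k) * B j k (fun i => (1 - s) * x i + s * y i))) 0 1) by ring.
rewrite -RInt_minus' //. apply RInt_ext => s _. rewrite -sumI_minus. apply sumI_ext => k. ring. Qed.

End Key.

Section Final.
Local Open Scope R_scope.
Context {d : nat} (B : 'I_d -> 'I_d -> vec d -> R) (hB : magnetic_field B).

Ltac rring := match goal with |- ?a = ?b => change (@eq R a b); ring end.
Ltac c2' := repeat first [ apply (c2A0 B hB) => ? | apply (c2Gf B hB) => ? | apply continuity_2d_pt_plus
  | apply continuity_2d_pt_minus
  | apply continuity_2d_pt_mult | apply continuity_2d_pt_opp | apply continuity_2d_pt_id1
  | apply continuity_2d_pt_id2 | apply continuity_2d_pt_const | apply c2_sumI => ?
  | apply (c2B B hB) => ? | apply (c2dB B hB) => ? ].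

Lemma key j (x y : vec d) :
  sumI (fun k => (ev j k - zerov k) * RInt (fun s => A0 B k (fun i => (1 - s) * x i + s * y i)) 0 1
     + (y k - x k) * RInt (fun s => (1 - s) * Gf B k (fun i => (1 - s) * x i + s * y i) zerov
                                 + s * Gf B k (fun i => (1 - s) * x i + s * y i) (ev j)) 0 1) +
  sumI (fun k => (zerov k - ev j k) * RInt (fun s => A0 B k (fun i => (1 - s) * x i + s * y i)) 0 1
     + (y k - x k) * RInt (fun s => (1 - s) * Gf B k (fun i => (1 - s) * x i + s * y i) (ev j)
                                 + s * Gf B k (fun i => (1 - s) * x i + s * y i) zerov) 0 1)
  = A0 B j y - A0 B j x + (Agauge B j x y - Agauge B j y x).
Proof. rewrite -sumI_plus.
transitivity (sumI (fun k => (y k - x k) * RInt (fun s => Gf B k (fun i => (1 - s) * x i + s * y i) (ev j)) 0 1)).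
{ apply sumI_ext => k.
  rewrite (RInt_ext (fun s => (1 - s) * Gf B k (fun i => (1 - s) * x i + s * y i) zerov
                                 + s * Gf B k (fun i => (1 - s) * x i + s * y i) (ev j))
     (fun s => s * Gf B k (fun i => (1 - s) * x i + s * y i) (ev j))); last first.
  { move=> s _. rewrite (Gf_zero B). rring. }
  rewrite (RInt_ext (fun s => (1 - s) * Gf B k (fun i => (1 - s) * x i + s * y i) (ev j)
                                 + s * Gf B k (fun i => (1 - s) * x i + s * y i) zerov)
     (fun s => (1 - s) * Gf B k (fun i => (1 - s) * x i + s * y i) (ev j))); last first.
  { move=> s _. rewrite (Gf_zero B). rring. }
  have E : RInt (fun s => s * Gf B k (fun i => (1 - s) * x i + s * y i) (ev j)) 0 1 +
     RInt (fun s => (1 - s) * Gf B k (fun i => (1 - s) * x i + s * y i) (ev j)) 0 1 =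
     RInt (fun s => Gf B k (fun i => (1 - s) * x i + s * y i) (ev j)) 0 1.
  { rewrite -RInt_plus'. apply RInt_ext => s _; rring.
    apply ex_RInt_c2 => s; c2'. apply ex_RInt_c2 => s; c2'. }
  rewrite -E /zerov. ring. }
have Hex : forall k, ex_RInt (fun s => (y k - x k) * Gf B k (fun i => (1 - s) * x i + s * y i) (ev j)) 0 1.
{ move=> k; apply ex_RInt_c2 => s; c2'. }
have E2 : sumI (fun k => (y k - x k) * RInt (fun s => Gf B k (fun i => (1 - s) * x i + s * y i) (ev j)) 0 1)
  = RInt (fun s => sumI (fun k => (y k - x k) * Gf B k (fun i => (1 - s) * x i + s * y i) (ev j))) 0 1.
{ rewrite (proj2 (RInt_sumI _ 0 1 Hex)). apply sumI_ext => k. rewrite RInt_cmul //.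
  apply ex_RInt_c2 => s; c2'. }
rewrite E2 (RInt_ext _ (fun s => Gf B j (fun i => (1 - s) * x i + s * y i) (fun k => y k - x k)
   + sumI (fun k => (y k - x k) * B j k (fun i => (1 - s) * x i + s * y i)))); last first.
{ move=> s _; apply (Gf_curl B hB). }
rewrite RInt_plus'. by rewrite (A0_ftc B hB) (Ag_diff B hB).
apply ex_RInt_c2 => s; c2'. apply ex_RInt_c2 => s; c2'. Qed.

Lemma is_derive_eqv (f : R -> R) x l l' : is_derive f x l -> l = l' -> is_derive f x l'.
Proof. by move=> H <-. Qed.

Lemma gauss_line (V : R -> vec d) (p v : vec d) t0 : (forall t i, V t i = p i + t * v i) ->
  is_derive (fun t => gauss (V t)) t0 (gauss (V t0) * - sumI (fun i => V t0 i * v i)).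
Proof. move=> HV.
have -> : V = (fun t i => p i + t * v i) by do 2 (apply functional_extensionality => ?); apply HV.
rewrite /gauss /dotv.
set c := Rpower (2 * PI) (- (INR d / 2)) * Rpower PI (- (INR d / 4)).
have HS : is_derive (fun t => sumI (fun i => (p i + t * v i) * (p i + t * v i))) t0
   (sumI (fun i => v i * (p i + t0 * v i) + (p i + t0 * v i) * v i)).
{ apply is_derive_sumI => i. apply: is_derive_mult'; apply is_derive_aff2. }
have HS2 : is_derive (fun t => - sumI (fun i => (p i + t * v i) * (p i + t * v i)) / 2) t0
   ((-1/2) * sumI (fun i => v i * (p i + t0 * v i) + (p i + t0 * v i) * v i)).
{ apply: (is_derive_ext (fun t => (-1/2) * sumI (fun i => (p i + t * v i) * (p i + t * v i)))).
  move=> t. change (@eq R ((-1/2) * sumI (fun i => (p i + t * v i) * (p i + t * v i))) (- sumI (fun i => (p i + t * v i) * (p i + t * v i)) / 2)). field. by apply is_derive_cmul. }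
have HE := is_derive_comp exp _ t0 _ _ (is_derive_exp _) HS2.
have HC := is_derive_cmul _ c _ _ HE.
apply: (is_derive_eqv _ _ _ _ HC). rewrite /scal /= /mult /=.
have -> : sumI (fun i => v i * (p i + t0 * v i) + (p i + t0 * v i) * v i) =
   2 * sumI (fun i => (p i + t0 * v i) * v i).
{ rewrite -sumI_scal; apply sumI_ext => i; ring. }
field. Qed.

Lemma dot_line2 (c : vec d) (V : R -> vec d) (p v : vec d) t0 : (forall t i, V t i = p i + t * v i) ->
  is_derive (fun t => dotv c (V t)) t0 (sumI (fun i => c i * v i)).
Proof. move=> HV. rewrite /dotv. apply is_derive_sumI => i.
apply: (is_derive_ext (fun t => c i * (p i + t * v i))). move=> t; by rewrite HV.
apply is_derive_aff. Qed.

Lemma dot_line1 (c : vec d) (V : R -> vec d) (p v : vec d) t0 : (forall t i, V t i = p i + t * v i) ->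
  is_derive (fun t => dotv (V t) c) t0 (sumI (fun i => v i * c i)).
Proof. move=> HV. rewrite /dotv. apply is_derive_sumI => i.
apply: (is_derive_ext (fun t => c i * (p i + t * v i))). move=> t; rewrite HV; rring.
apply: is_derive_eqv. apply is_derive_aff. rring. Qed.

Definition Wc (a' a0 e1 e2 b : R) : C :=
  Cplus (Cmult (RtoC a') (Cmult (cexpi e1) (cexpi e2)))
     (Cmult (Cmult (RtoC a0) (Cmult (cexpi e1) (cexpi e2))) (Cmult Ci (RtoC b))).

Lemma core (a th1 th2 : R -> R) a' b1 b2 : is_derive a 0 a' -> is_derive th1 0 b1 -> is_derive th2 0 b2 ->
  is_derive (fun t => Re (Cmult (RtoC (a t)) (Cmult (cexpi (th1 t)) (cexpi (th2 t))))) 0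
   (Re (Wc a' (a 0) (th1 0) (th2 0) (b1 + b2))) /\
  is_derive (fun t => Im (Cmult (RtoC (a t)) (Cmult (cexpi (th1 t)) (cexpi (th2 t))))) 0
   (Im (Wc a' (a 0) (th1 0) (th2 0) (b1 + b2))).
Proof. move=> Ha H1 H2. rewrite /Wc /cexpi /=.
have E1 := is_derive_unique _ _ _ Ha. have E2 := is_derive_unique _ _ _ H1. have E3 := is_derive_unique _ _ _ H2.
split; (auto_derive; [repeat split; eexists; eassumption|]);
 rewrite E1 E2 E3; ring.
Qed.

Lemma Csum_factor (f : 'I_d -> C) (c : 'I_d -> R) (Z : C) :
  (forall k, f k = Cmult (RtoC (c k)) Z) -> Csum f = Cmult (RtoC (sumI c)) Z.
Proof. move=> H. rewrite /Csum /sumI. elim: (enum 'I_d) => [|a l IH] /=.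
 apply injective_projections; simpl; ring.
 rewrite IH H. apply injective_projections; simpl; ring. Qed.

Lemma final_alg (a' a0 e1 e2 xj Dy Dx SB Q : R) : Dy = - Dx + SB + Q ->
  Cmult (Copp Ci) (Re (Wc a' a0 e1 e2 (xj + Dy)), Im (Wc a' a0 e1 e2 (xj + Dy))) =
  Cplus (Cminus (Cmult Ci (Re (Wc (- a') a0 e1 e2 (- xj + Dx)), Im (Wc (- a') a0 e1 e2 (- xj + Dx))))
     (Cmult (RtoC SB) (Cmult Ci (Cmult (Cmult (RtoC a0) (Cmult (cexpi e1) (cexpi e2))) Ci))))
   (Cmult (RtoC Q) (Cmult (RtoC a0) (Cmult (cexpi e1) (cexpi e2)))).
Proof. move=> ->. rewrite /Wc /cexpi. apply injective_projections; simpl; ring. Qed.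

End Final.

Section Main.
Local Open Scope R_scope.
Context {d : nat} (B : 'I_d -> 'I_d -> vec d -> R) (hB : magnetic_field B).

Ltac rring := match goal with |- ?a = ?b => change (@eq R a b); ring end.

Lemma main_lemma (lam : R) (y x xi : vec d) (j : 'I_d) :
  has_Cpartial (fun y' => gA B lam x xi y') j y /\
  has_Cpartial (fun x' => gA B lam x' xi y) j x /\
  (forall k : 'I_d, has_Cpartial (fun xi' => gA B lam x xi' y) k xi) /\
  Cmult (Copp Ci) (Cpartial (fun y' => gA B lam x xi y') j y) =
  Cplus (Cminus
    (Cmult Ci (Cpartial (fun x' => gA B lam x' xi y) j x))
    (Csum (fun k => Cmult (RtoC (B j k x))
                          (Cmult Ci (Cpartial (fun xi' => gA B lam x xi' y) k xi)))))
    (Cmult (RtoC (A0 B j y - A0 B j x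
                  - taylor_rem1 (fun z => Agauge B j z x) x y
                  + taylor_rem1 (fun z => Agauge B j x z) x y))
           (gA B lam x xi y)).
Proof.
pose c0 := Rpower lam (INR d / 2).
pose a0 := c0 * gauss (fun i => lam * (y i - x i)).
pose e1 := dotv xi (fun i => y i - x i).
pose e2 := phiA B y x.
pose S := sumI (fun i => lam * (y i - x i) * (lam * ev j i)).
pose AY := - (c0 * (gauss (fun i => lam * (y i - x i)) * S)).
pose SB := sumI (fun k => B j k x * (y k - x k)).
have HaY : is_derive (fun t => c0 * gauss (fun i => lam * (upd y j t i - x i))) 0 AY.
{ have hv : forall t i, lam * (upd y j t i - x i) = lam * (y i - x i) + t * (lam * ev j i).
  { move=> t i; rewrite upd_lin; ring. }
  have H := is_derive_cmul _ c0 _ _ (gauss_line (fun t i => lam * (upd y j t i - x i))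
     (fun i => lam * (y i - x i)) (fun i => lam * ev j i) 0 hv).
  cbv beta in H; rewrite upd0 in H. apply: (is_derive_eqv _ _ _ _ H). rewrite /AY /S. rring. }
have HaX : is_derive (fun t => c0 * gauss (fun i => lam * (y i - upd x j t i))) 0 (- AY).
{ have hv : forall t i, lam * (y i - upd x j t i) = lam * (y i - x i) + t * (- (lam * ev j i)).
  { move=> t i; rewrite upd_lin; ring. }
  have H := is_derive_cmul _ c0 _ _ (gauss_line (fun t i => lam * (y i - upd x j t i))
     (fun i => lam * (y i - x i)) (fun i => - (lam * ev j i)) 0 hv).
  cbv beta in H; rewrite upd0 in H. apply: (is_derive_eqv _ _ _ _ H). rewrite /AY /S.
  rewrite (sumI_ext (fun i => lam * (y i - x i) * - (lam * ev j i)) (fun i => - (lam * (y i - x i) * (lam * ev j i)))).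
  rewrite sumI_opp. rring. move=> i; ring. }
have Ha0 : is_derive (fun _ : R => a0) 0 0 by apply: is_derive_const.
have H1Y : is_derive (fun t => dotv xi (fun i => upd y j t i - x i)) 0 (xi j).
{ have hv : forall t i, upd y j t i - x i = (y i - x i) + t * ev j i.
  { move=> t i; rewrite upd_lin; ring. }
  have H := dot_line2 xi (fun t i => upd y j t i - x i) (fun i => y i - x i) (ev j) 0 hv.
  apply: (is_derive_eqv _ _ _ _ H). rewrite /ev. apply sumI_delta. }
have H1X : is_derive (fun t => dotv xi (fun i => y i - upd x j t i)) 0 (- xi j).
{ have hv : forall t i, y i - upd x j t i = (y i - x i) + t * (- ev j i).
  { move=> t i; rewrite upd_lin; ring. }
  have H := dot_line2 xi (fun t i => y i - upd x j t i) (fun i => y i - x i) (fun i => - ev j i) 0 hv.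
  apply: (is_derive_eqv _ _ _ _ H). rewrite /ev -(sumI_delta (fun i => - xi i) j).
  apply sumI_ext => i; ring. }
have H1K : forall k, is_derive (fun t => dotv (upd xi k t) (fun i => y i - x i)) 0 (y k - x k).
{ move=> k. have H := dot_line1 (fun i => y i - x i) (fun t => upd xi k t) xi (ev k) 0 (upd_lin xi k).
  apply: (is_derive_eqv _ _ _ _ H). rewrite /ev -(sumI_delta (fun i => y i - x i) k).
  apply sumI_ext => i; ring. }
have H2Y : is_derive (fun t => phiA B (upd y j t) x) 0
  (sumI (fun k => (ev j k - zerov k) * RInt (fun s => A0 B k (fun i => (1 - s) * x i + s * y i)) 0 1
     + (y k - x k) * RInt (fun s => (1 - s) * Gf B k (fun i => (1 - s) * x i + s * y i) zerov
                                 + s * Gf B k (fun i => (1 - s) * x i + s * y i) (ev j)) 0 1)).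
{ have hv : forall (t : R) i, x i = x i + t * zerov i by move=> t i; rewrite /zerov; ring.
  have H := phi_line B hB (fun t => upd y j t) (fun _ => x) y x (ev j) zerov 0 (upd_lin y j) hv.
  cbv beta in H. rewrite upd0 in H. exact H. }
have H2X : is_derive (fun t => phiA B y (upd x j t)) 0
  (sumI (fun k => (zerov k - ev j k) * RInt (fun s => A0 B k (fun i => (1 - s) * x i + s * y i)) 0 1
     + (y k - x k) * RInt (fun s => (1 - s) * Gf B k (fun i => (1 - s) * x i + s * y i) (ev j)
                                 + s * Gf B k (fun i => (1 - s) * x i + s * y i) zerov) 0 1)).
{ have hv : forall (t : R) i, y i = y i + t * zerov i by move=> t i; rewrite /zerov; ring.
  have H := phi_line B hB (fun _ => y) (fun t => upd x j t) y x zerov (ev j) 0 hv (upd_lin x j).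
  cbv beta in H. rewrite upd0 in H. exact H. }
have H2K : is_derive (fun _ : R => e2) 0 0 by apply: is_derive_const.
have CY := core _ _ _ _ _ _ HaY H1Y H2Y. cbv beta in CY. rewrite upd0 in CY.
have CX := core _ _ _ _ _ _ HaX H1X H2X. cbv beta in CX. rewrite upd0 in CX.
have CK := fun k => core _ _ _ _ _ _ Ha0 (H1K k) H2K.
split. { split. eexists; exact (proj1 CY). eexists; exact (proj2 CY). }
split. { split. eexists; exact (proj1 CX). eexists; exact (proj2 CX). }
split. { move=> k. have H := CK k. split. eexists; exact (proj1 H). eexists; exact (proj2 H). }
have CY1 := is_derive_ext _ (fun t => Re (gA B lam x xi (upd y j t))) _ _ (fun t => Logic.eq_refl) (proj1 CY).
have CY2 := is_derive_ext _ (fun t => Im (gA B lam x xi (upd y j t))) _ _ (fun t => Logic.eq_refl) (proj2 CY).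
have CX1 := is_derive_ext _ (fun t => Re (gA B lam (upd x j t) xi y)) _ _ (fun t => Logic.eq_refl) (proj1 CX).
have CX2 := is_derive_ext _ (fun t => Im (gA B lam (upd x j t) xi y)) _ _ (fun t => Logic.eq_refl) (proj2 CX).
rewrite /Cpartial /partial. cbv beta.
rewrite (is_derive_unique _ _ _ CY1) (is_derive_unique _ _ _ CY2).
rewrite (is_derive_unique _ _ _ CX1) (is_derive_unique _ _ _ CX2).
rewrite (Csum_factor _ (fun k => B j k x * (y k - x k)) (Cmult Ci (Cmult (Cmult (RtoC a0) (Cmult (cexpi e1) (cexpi e2))) Ci))); last first.
{ move=> k. have H := CK k. cbv beta in H. rewrite upd0 in H.
  have K1 := is_derive_ext _ (fun t => Re (gA B lam x (upd xi k t) y)) _ _ (fun t => Logic.eq_refl) (proj1 H).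
  have K2 := is_derive_ext _ (fun t => Im (gA B lam x (upd xi k t) y)) _ _ (fun t => Logic.eq_refl) (proj2 H).
  rewrite (is_derive_unique _ _ _ K1) (is_derive_unique _ _ _ K2) /Wc /cexpi.
  rewrite /e1 /e2 /a0 /c0. apply injective_projections; simpl; ring. }
have K := key B hB j x y.
have T1 : taylor_rem1 (fun z => Agauge B j z x) x y = Agauge B j y x - (-1/2) * SB.
{ rewrite /taylor_rem1. cbv beta. rewrite (Ag_xx B).
  rewrite (sumI_ext _ (fun i => (-1/2) * (B j i x * (y i - x i)))). rewrite sumI_scal /SB; ring.
  move=> i; rewrite (Ag_p1 B hB); field. }
have T2 : taylor_rem1 (fun z => Agauge B j x z) x y = Agauge B j x y - (1/2) * SB.
{ rewrite /taylor_rem1. cbv beta. rewrite (Ag_xx B).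
  rewrite (sumI_ext _ (fun i => (1/2) * (B j i x * (y i - x i)))). rewrite sumI_scal /SB; ring.
  move=> i; rewrite (Ag_p2 B hB); field. }
rewrite T1 T2.
apply: final_alg. rewrite /SB. lra.
Qed.

End Main.

Theorem lemma6p1 (d : nat) (hd : (2 <= d)%N) (lam : R) (hlam : 1 <= lam)
  (B : 'I_d -> 'I_d -> vec d -> R) (hB : magnetic_field B)
  (y x xi : vec d) (j : 'I_d) :
  has_Cpartial (fun y' => gA B lam x xi y') j y /\
  has_Cpartial (fun x' => gA B lam x' xi y) j x /\
  (forall k : 'I_d, has_Cpartial (fun xi' => gA B lam x xi' y) k xi) /\
  Cmult (Copp Ci) (Cpartial (fun y' => gA B lam x xi y') j y) =
  Cplus (Cminus
    (Cmult Ci (Cpartial (fun x' => gA B lam x' xi y) j x))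
    (Csum (fun k => Cmult (RtoC (B j k x))
                          (Cmult Ci (Cpartial (fun xi' => gA B lam x xi' y) k xi)))))
    (Cmult (RtoC (A0 B j y - A0 B j x
                  - taylor_rem1 (fun z => Agauge B j z x) x y
                  + taylor_rem1 (fun z => Agauge B j x z) x y))
           (gA B lam x xi y)).
Proof. exact (main_lemma B hB lam y x xi j). Qed.
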